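(* Let $n\ge 1$ and $r\in\{0,1,\dots,n-1\}$. For permutations $\mathbf{u},\mathbf{v}\in S_n$ in one-line notation $\mathbf{u}=[u(1),\dots,u(n)]$, $\mathbf{v}=[v(1),\dots,v(n)]$, define the cost $C(\mathbf{u}\to\mathbf{v})=\max_{i\in\{1,\dots,n\}}\bigl(v^{-1}(i)-u^{-1}(i)\bigr)$, and for $\mathbf{u}\in S_n$ define the ball $B_{n,r}(\mathbf{u})=\{\mathbf{v}\in S_n : C(\mathbf{u}\to\mathbf{v})\le r\}$. Then for every $\mathbf{u}\in S_n$, $$|B_{n,r}(\mathbf{u})|=r!\,(r+1)^{n-r}.$$
   Context: Here $u^{-1}(i)$ denotes the position of the element $i$ in the sequence $[u(1),\dots,u(n)]$, and similarly for $v^{-1}$. The cost $C(\mathbf{u}\to\mathbf{v})$ is thus the maximum, over elements $i$, of the increase in position of $i$ when passing from $\mathbf{u}$ to $\mathbf{v}$. *)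

(* Defs.v *)
From mathcomp Require Import all_boot all_order all_algebra all_fingroup.
Set Implicit Arguments. Unset Strict Implicit. Unset Printing Implicit Defensive.
Import Order.TTheory GRing.Theory Num.Theory.
Local Open Scope ring_scope.

(* Permutations of S_n, n = m.+1 >= 1, are {perm 'I_n}; positions and values
   are 0-based (shifting by 1 does not affect differences).
   u i = value at position i (one-line notation); (u^-1)%g x = position of x. *)

(* Cost C(u -> v) = max_i (v^{-1}(i) - u^{-1}(i)), computed in int; the
   iterated max is seeded with the term for i = ord0 (the index set is
   nonempty), so this is exactly the maximum over all i. *)
Definition cost (m : nat) (u v : {perm 'I_m.+1}) : int :=
  let d := fun i : 'I_m.+1 =>
    (nat_of_ord ((v^-1)%g i))%:Z - (nat_of_ord ((u^-1)%g i))%:Z in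
  \big[Num.max/d ord0]_(i < m.+1) d i.

Definition ball (m r : nat) (u : {perm 'I_m.+1}) : {set {perm 'I_m.+1}} :=
  [set v | cost u v <= r%:Z].

(* Main.v *)
Require Import Defs.
From mathcomp Require Import all_boot all_order all_algebra all_fingroup.
From mathcomp Require Import zify.
Set Implicit Arguments. Unset Strict Implicit. Unset Printing Implicit Defensive.
Import Order.TTheory GRing.Theory Num.Theory.

Lemma cost_le m r (u v : {perm 'I_m.+1}) :
  (cost u v <= r%:Z)%R <-> forall y : 'I_m.+1, (v^-1)%g (u y) <= y + r.
Proof.
rewrite /cost; split.
  move/Order.TotalTheory.bigmax_leP => [_ H] y.
  have := H (u y) isT; rewrite permK.
  move: (nat_of_ord ((v^-1)%g (u y))) (nat_of_ord y) => a b; lia.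
move=> H; apply/Order.TotalTheory.bigmax_leP; split.
  have := H ((u^-1)%g ord0); rewrite permKV.
  move: (nat_of_ord ((v^-1)%g ord0)) (nat_of_ord ((u^-1)%g ord0)) => a b; lia.
move=> i _; have := H ((u^-1)%g i); rewrite permKV.
move: (nat_of_ord ((v^-1)%g i)) (nat_of_ord ((u^-1)%g i)) => a b; lia.
Qed.

Definition cand (n r k : nat) (s : seq nat) :=
  [seq x <- iota 0 (minn (k + r).+1 n) | x \notin s].

Fixpoint gen (n r k : nat) : seq (seq nat) :=
  match k with
  | 0 => [:: [::]]
  | k'.+1 => [seq rcons s x | s <- gen n r k', x <- cand n r k' s]
  end.

Definition good (n r k : nat) (s : seq nat) :=
  size s = k /\ uniq s /\ (forall i, i < k -> nth 0 s i < minn (i + r).+1 n).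

Lemma gen_mem n r k s : s \in gen n r k <-> good n r k s.
Proof.
elim: k s => [|k IH] s /=.
  rewrite inE; split.
    by move/eqP->; split=> //; split.
  by case=> /size0nil -> _; rewrite eqxx.
split.
  case/allpairsPdep=> s0 [x [Hs0 Hx ->]].
  have [Hsz [Hu Hb]] := (IH s0).1 Hs0.
  move: Hx; rewrite mem_filter mem_iota => /andP [Hxs /andP [_ Hxlt]].
  split; first by rewrite size_rcons Hsz.
  split; first by rewrite rcons_uniq Hxs Hu.
  move=> i Hi; rewrite nth_rcons Hsz.
  case: (ltnP i k) => Hik.
    by have := Hb i Hik; lia.
  have -> : i = k by lia.
  by rewrite eqxx; lia.
case=> Hsz [Hu Hb].
case/lastP: s Hsz Hu Hb => [|s0 x]; first by [].
rewrite size_rcons => -[Hsz] Hu Hb.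
apply/allpairsPdep; exists s0, x; split=> //.
  apply/IH; split=> //; split; first by move: Hu; rewrite rcons_uniq => /andP[].
  move=> i Hi; have := Hb i (leq_trans Hi (leqnSn _)).
  by rewrite nth_rcons Hsz Hi.
move: Hu; rewrite rcons_uniq => /andP [Hxs _].
rewrite mem_filter Hxs mem_iota /=.
have := Hb k (leqnn _); rewrite nth_rcons Hsz ltnn eqxx; lia.
Qed.

Lemma size_cand n r k s : k < n -> good n r k s ->
  size (cand n r k s) = minn (k + r).+1 n - k.
Proof.
move=> Hkn [Hsz [Hu Hb]].
rewrite /cand size_filter.
have Hc := count_predC (mem s) (iota 0 (minn (k + r).+1 n)).
rewrite size_iota in Hc.
have Hcs : count (mem s) (iota 0 (minn (k + r).+1 n)) = k.
  rewrite -size_filter -Hsz; apply: perm_size; apply: uniq_perm.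
  - by apply: filter_uniq; apply: iota_uniq.
  - done.
  move=> y; rewrite mem_filter mem_iota /=.
  case Hy: (y \in s) => //=.
  move/(nthP 0): Hy => [i Hi <-]; rewrite Hsz in Hi.
  have := Hb i Hi; rewrite Hsz; move: (nth 0 s i) => z; lia.
have -> : count (fun x => x \notin s) (iota 0 (minn (k + r).+1 n))
  = count (predC (mem s)) (iota 0 (minn (k + r).+1 n)) by [].
lia.
Qed.

Lemma sumn_const (T : Type) (s : seq T) c : sumn [seq c | _ <- s] = c * size s.
Proof. by elim: s => [|x s IH] /=; rewrite ?muln0 // IH mulnS. Qed.

Fixpoint g (n r k : nat) : nat :=
  match k with 0 => 1 | k'.+1 => g n r k' * (minn (k' + r).+1 n - k') end.

Lemma size_gen n r k : k <= n -> size (gen n r k) = g n r k.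
Proof.
elim: k => [|k IH] Hk //=.
rewrite size_allpairs_dep -IH ?(ltnW Hk) //.
have -> : [seq size (cand n r k x) | x <- gen n r k] =
   [seq minn (k + r).+1 n - k | x <- gen n r k].
  apply/eq_in_map => s /gen_mem Hs; exact: size_cand.
rewrite sumn_const /=; lia.
Qed.

Lemma g_pow n r k : k + r <= n -> g n r k = r.+1 ^ k.
Proof.
elim: k => [|k IH] Hk //=.
rewrite IH; last lia.
have -> : minn (k + r).+1 n - k = r.+1 by lia.
by rewrite expnS mulnC.
Qed.

Lemma g_tail n r j : j <= r -> r < n ->
  g n r (n - r + j) * (r - j)`! = r.+1 ^ (n - r) * r`!.
Proof.
move=> Hj Hr; elim: j Hj => [|j IH] Hj.
  by rewrite addn0 subn0 g_pow //; lia.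
rewrite addnS /=.
have -> : minn (n - r + j + r).+1 n - (n - r + j) = r - j by lia.
have Hf : (r - j)`! = (r - j) * (r - j.+1)`!.
  have -> : r - j = (r - j.+1).+1 by lia.
  by rewrite factS.
rewrite -IH; last lia.
by rewrite Hf mulnA.
Qed.

Lemma g_full n r : r < n -> g n r n = r`! * r.+1 ^ (n - r).
Proof.
move=> Hr; have := g_tail (leqnn r) Hr.
rewrite subnn fact0 muln1 subnK ?(ltnW Hr) // => ->.
by rewrite mulnC.
Qed.

Lemma gen_uniq n r k : uniq (gen n r k).
Proof.
elim: k => [|k IH] //=.
apply: allpairs_uniq_dep => //.
  by move=> s _; apply: filter_uniq; apply: iota_uniq.
move=> [s1 x1] [s2 x2] _ _ /= /rcons_inj [-> ->] //.
Qed.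

Definition F m (u v : {perm 'I_m.+1}) : seq nat :=
  mkseq (fun i => nat_of_ord ((u * v^-1)%g (inord i))) m.+1.

Lemma F_inj m (u : {perm 'I_m.+1}) : injective (F u).
Proof.
move=> v w E.
have H : (u * v^-1)%g = (u * w^-1)%g.
  apply/permP => i; apply: val_inj.
  have := congr1 (nth 0 ^~ i) E; rewrite /F !nth_mkseq ?ltn_ord //.
  by rewrite inord_val.
by apply: invg_inj; apply: (mulgI u).
Qed.

Lemma F_mem m r (u : {perm 'I_m.+1}) s :
  s \in [seq F u v | v <- enum (ball r u)] <-> good m.+1 r m.+1 s.
Proof.
split.
  case/mapP => v; rewrite mem_enum inE => /cost_le Hv ->.
  split; first by rewrite size_mkseq.
  split.
    rewrite /F /mkseq map_inj_in_uniq ?iota_uniq //.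
    move=> i j; rewrite !mem_iota /= => Hi Hj /val_inj /perm_inj E.
    move: E => /(congr1 (@nat_of_ord _)); rewrite !inordK //; lia.
  move=> i Hi; rewrite /F nth_mkseq // permM.
  have := Hv (inord i); rewrite inordK //.
  move: (nat_of_ord ((v^-1)%g (u (inord i)))) (ltn_ord ((v^-1)%g (u (inord i)))) => a Ha Hb.
  lia.
case=> Hsz [Hu Hb].
have Hlt : forall i, i < m.+1 -> nth 0 s i < m.+1.
  move=> i Hi; have := Hb i Hi; lia.
pose gf := [ffun i : 'I_m.+1 => (inord (nth 0 s i) : 'I_m.+1)].
have ginj : injective gf.
  move=> i j; rewrite !ffunE => E.
  have := congr1 (@nat_of_ord _) E; rewrite !inordK ?Hlt ?ltn_ord // => E2.
  apply: val_inj; apply/eqP; rewrite -(nth_uniq 0 _ _ Hu) ?Hsz ?ltn_ord //.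
  by apply/eqP.
pose sg := perm ginj.
have Hsg : (u * ((sg^-1 * u)^-1))%g = sg.
  by rewrite invMg invgK mulKVg.
apply/mapP; exists (sg^-1 * u)%g.
  rewrite mem_enum inE; apply/cost_le => y.
  rewrite -permM Hsg permE ffunE inordK ?Hlt ?ltn_ord //.
  have := Hb y (ltn_ord y); lia.
apply: (@eq_from_nth _ 0); first by rewrite size_mkseq Hsz.
move=> i; rewrite Hsz => Hi.
by rewrite /F nth_mkseq // Hsg permE ffunE inordK ?Hlt // inordK.
Qed.

Theorem theorem2 (m r : nat) (hr : (r < m.+1)%N) (u : {perm 'I_m.+1}) :
  #|ball r u| = (r`! * (r.+1) ^ (m.+1 - r))%N.
Proof.
rewrite -g_full // -size_gen // cardE -(size_map (F u)).
apply: perm_size; apply: uniq_perm.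
- by rewrite map_inj_uniq ?enum_uniq //; apply: F_inj.
- exact: gen_uniq.
move=> s; apply/idP/idP.
  by move/F_mem/gen_mem.
by move/gen_mem/F_mem.
Qed.
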